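(* Let $V\subseteq\mathcal V$ be finite and let $\Theta,\Psi\subseteq\mathcal P(\mathcal H_V)$ be convex and closed. (1) If $\Theta\neq\emptyset$, then $\Theta\preceq_{dem}\Psi$ iff $\Theta\le_S\Psi$. (2) If $\Psi\neq\emptyset$, then $\Theta\preceq_{ang}\Psi$ iff $\Theta\le_H\Psi$.
   Context: $\mathcal H_V$ is a finite-dimensional Hilbert space (tensor product of qubit spaces). $\mathcal D(\mathcal H_V)$: partial density operators (positive, trace $\le1$); $\mathcal P(\mathcal H_V)$: effects (positive operators with eigenvalues in $[0,1]$); $\sqsubseteq$: Löwner order. For $\Theta\subseteq\mathcal P(\mathcal H_V)$ and $\rho\in\mathcal D(\mathcal H_V)$: $\mathrm{Exp}_{dem}(\rho\models\Theta)=\inf_{M\in\Theta}{\rm tr}(M\rho)$ (equal to ${\rm tr}(\rho)$ if $\Theta=\emptyset$) and $\mathrm{Exp}_{ang}(\rho\models\Theta)=\sup_{M\in\Theta}{\rm tr}(M\rho)$ (equal to $0$ if $\Theta=\emptyset$). $\Theta\preceq_{dem}\Psi$ iff $\mathrm{Exp}_{dem}(\rho\models\Theta)\le\mathrm{Exp}_{dem}(\rho\models\Psi)$ for all $\rho\in\mathcal D(\mathcal H_V)$; $\Theta\preceq_{ang}\Psi$ iff $\mathrm{Exp}_{ang}(\rho\models\Theta)\le\mathrm{Exp}_{ang}(\rho\models\Psi)$ for all $\rho\in\mathcal D(\mathcal H_V)$. $\Theta\le_H\Psi$ iff $\forall M\in\Theta\,\exists N\in\Psi: M\sqsubseteq N$;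 $\Theta\le_S\Psi$ iff $\forall N\in\Psi\,\exists M\in\Theta:M\sqsubseteq N$. *)

(* Defs.v *)
From HB Require Import structures.
From mathcomp Require Import all_boot all_order all_algebra.
From mathcomp Require Import complex.
From mathcomp Require Import all_classical all_reals topology normedtype.
Import Order.TTheory GRing.Theory Num.Theory numFieldNormedType.Exports.

Set Implicit Arguments. Unset Strict Implicit. Unset Printing Implicit Defensive.

Local Open Scope ring_scope.
Local Open Scope classical_set_scope.

Section QDefs.
Variable R : realType.
Variable d : nat.
Local Notation C := (R[i]).
Local Notation M := ('M[C]_d).

Definition adjmx (A : 'M[C]_(d,d)) : 'M[C]_(d,d) := (map_mx Num.conj A)^T.
Definition adjv (v : 'cV[C]_d) : 'rV[C]_d := (map_mx Num.conj v)^T.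

(* positive (semidefinite) operator: <v|A|v> >= 0 for all v
   (the order on R[i] means: real and nonnegative) *)
Definition psd (A : M) : Prop := forall v : 'cV[C]_d, 0 <= (adjv v *m A *m v) 0 0.

Definition lowner (A B : M) : Prop := psd (B - A).

(* effects P(H_V): positive operators with eigenvalues in [0,1], i.e. 0 <= A <= I *)
Definition effect (A : M) : Prop := psd A /\ lowner A 1%:M.

Definition pdensity (rho : M) : Prop := psd rho /\ \tr rho <= 1.

(* real-valued expectation tr(A rho) (real for A, rho positive) *)
Definition expv (A rho : M) : R := complex.Re (\tr (A *m rho)).

Definition Exp_dem (rho : M) (Th : set M) : R :=
  if pselect (Th = set0) then complex.Re (\tr rho)
  else inf [set expv A rho | A in Th].

Definition Exp_ang (rho : M) (Th : set M) : R :=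
  if pselect (Th = set0) then 0
  else sup [set expv A rho | A in Th].

Definition preceq_dem (Th Ps : set M) : Prop :=
  forall rho, pdensity rho -> Exp_dem rho Th <= Exp_dem rho Ps.
Definition preceq_ang (Th Ps : set M) : Prop :=
  forall rho, pdensity rho -> Exp_ang rho Th <= Exp_ang rho Ps.

Definition le_H (Th Ps : set M) : Prop :=
  forall A, Th A -> exists B, Ps B /\ lowner A B.
Definition le_S (Th Ps : set M) : Prop :=
  forall B, Ps B -> exists A, Th A /\ lowner A B.

Definition mx_convex (Th : set M) : Prop :=
  forall A B, Th A -> Th B -> forall t : R, 0 <= t <= 1 ->
    Th ((t%:C)%C *: A + ((1 - t)%:C)%C *: B).

(* closedness w.r.t. the usual (Euclidean) topology on d x d complex matrices,
   transported through the homeomorphism A |-> (Re A, Im A) onto pairs of real matrices *)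
Definition mx_closed (Th : set M) : Prop :=
  closed ((fun A : M => (map_mx (@complex.Re R) A, map_mx (@complex.Im R) A)) @` Th).

End QDefs.

(* Main.v *)
Require Import Defs.
From HB Require Import structures.
From mathcomp Require Import all_boot all_order all_algebra.
From mathcomp Require Import complex.
From mathcomp Require Import all_classical all_reals topology normedtype.
From mathcomp Require Import spectral sesquilinear derive.
From mathcomp Require Import ring lra.

Section Dev.
Import Order.TTheory GRing.Theory Num.Theory numFieldNormedType.Exports.
Set Implicit Arguments. Unset Strict Implicit. Unset Printing Implicit Defensive.
Local Open Scope ring_scope.
Local Open Scope classical_set_scope.

Lemma mx_cont (T U : topologicalType) m n (f : T -> 'M[U]_(m,n)) :
  (forall i j, continuous (fun x => f x i j)) -> continuous f.
Proof.
move=> fc x A /= [P Pn PA].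
have : \forall y \near x, forall (k : 'I_m * 'I_n), P k.1 k.2 (f y k.1 k.2).
  by apply: filter_forall => k; exact: (fc k.1 k.2 x _ (Pn k.1 k.2)).
by apply: filterS => y Hy; apply: PA => i j; exact: (Hy (i,j)).
Qed.

Lemma pair_cont (T U V : topologicalType) (f : T -> U) (g : T -> V) :
  continuous f -> continuous g -> continuous (fun x => (f x, g x)).
Proof. by move=> fc gc x; apply: cvg_pair; [exact: fc|exact: gc]. Qed.

Section Top.
Variable R : realType.
Implicit Types f g : 'rV[R]_1 -> R.
Lemma contD (T : topologicalType) (f g : T -> R) : continuous f -> continuous g -> continuous (fun x => f x + g x).
Proof. by move=> fc gc x; exact: (@continuousD _ _ _ f g x (fc x) (gc x)). Qed.
Lemma contM (T : topologicalType) (f g : T -> R) : continuous f -> continuous g -> continuous (fun x => f x * g x).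
Proof. by move=> fc gc x; exact: (@continuousM _ _ f g x (fc x) (gc x)). Qed.
Lemma contN (T : topologicalType) (f : T -> R) : continuous f -> continuous (fun x => - f x).
Proof. by move=> fc x; exact: (@continuousN _ _ _ f x (fc x)). Qed.
Lemma contC (T : topologicalType) (c : R) : continuous (fun _ : T => c).
Proof. exact: cst_continuous. Qed.
Lemma cont_sum_seq (T : topologicalType) (I : Type) (r : seq I) (F : I -> T -> R) :
  (forall i, continuous (F i)) -> continuous (fun x => \sum_(i <- r) F i x).
Proof.
move=> Fc; elim: r => [|a r IH].
  have -> : (fun x => \sum_(i <- [::]) F i x) = (fun=> 0).
    by apply/funext=> x; rewrite big_nil.
  exact: cst_continuous.
have -> : (fun x => \sum_(i <- a :: r) F i x) = (fun x => F a x + \sum_(i <- r) F i x).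
  by apply/funext=> x; rewrite big_cons.
exact: contD.
Qed.
Lemma cont_sum (T : topologicalType) (I : finType) (F : I -> T -> R) :
  (forall i, continuous (F i)) -> continuous (fun x => \sum_i F i x).
Proof. exact: cont_sum_seq. Qed.
End Top.

Section Cx.
Variable R : realType.
Local Notation C := R[i].
Local Notation RE := (@complex.Re R).
Local Notation IM := (@complex.Im R).
Lemma ReD (x y : C) : RE (x + y) = RE x + RE y. Proof. by case: x => a b; case: y => c e; simpc. Qed.
Lemma ImD (x y : C) : IM (x + y) = IM x + IM y. Proof. by case: x => a b; case: y => c e; simpc. Qed.
Lemma ReN (x : C) : RE (- x) = - RE x. Proof. by case: x => a b; simpc. Qed.
Lemma ImN (x : C) : IM (- x) = - IM x. Proof. by case: x => a b; simpc. Qed.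
Lemma ReB (x y : C) : RE (x - y) = RE x - RE y. Proof. by rewrite ReD ReN. Qed.
Lemma ImB (x y : C) : IM (x - y) = IM x - IM y. Proof. by rewrite ImD ImN. Qed.
Lemma ReM (x y : C) : RE (x * y) = RE x * RE y - IM x * IM y. Proof. by case: x => a b; case: y => c e; simpc. Qed.
Lemma ImM (x y : C) : IM (x * y) = RE x * IM y + IM x * RE y. Proof. by case: x => a b; case: y => c e; simpc. Qed.
Lemma ReJ (x : C) : RE (x^*)%C = RE x. Proof. by case: x => a b; simpc. Qed.
Lemma ImJ (x : C) : IM (x^*)%C = - IM x. Proof. by case: x => a b; simpc. Qed.
Lemma conjE (x : C) : Num.conj x = (x^*)%C. Proof. by []. Qed.
Lemma Re0 : RE (0 : C) = 0. Proof. by []. Qed.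
Lemma Im0 : IM (0 : C) = 0. Proof. by []. Qed.
Lemma Re1 : RE (1 : C) = 1. Proof. by []. Qed.
Lemma Im1 : IM (1 : C) = 0. Proof. by []. Qed.
Lemma ReR (r : R) : RE (r%:C)%C = r. Proof. by []. Qed.
Lemma ImR (r : R) : IM (r%:C)%C = 0. Proof. by []. Qed.
Lemma Re_sum (I : Type) (r : seq I) (P : pred I) (F : I -> C) :
  RE (\sum_(i <- r | P i) F i) = \sum_(i <- r | P i) RE (F i).
Proof. by elim/big_rec2: _ => // i a b _ <-; rewrite ReD. Qed.
Lemma Im_sum (I : Type) (r : seq I) (P : pred I) (F : I -> C) :
  IM (\sum_(i <- r | P i) F i) = \sum_(i <- r | P i) IM (F i).
Proof. by elim/big_rec2: _ => // i a b _ <-; rewrite ImD. Qed.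
Lemma complex_eqP (x y : C) : RE x = RE y -> IM x = IM y -> x = y.
Proof. by case: x; case: y => a b c e /= -> ->. Qed.
Lemma ge0C (z : C) : (0 <= z) <-> (IM z = 0 /\ 0 <= RE z).
Proof. by rewrite lecE; split => [/andP[/eqP -> ->]|[-> ->]]; rewrite ?eqxx. Qed.
End Cx.

Section Enc.
Variable R : realType.
Variable d : nat.
Local Notation C := R[i].
Local Notation RE := (@complex.Re R).
Local Notation IM := (@complex.Im R).
Local Notation M := 'M[C]_d.
Definition J := (bool * bool * ('I_d * 'I_d))%type.
Local Notation N := #|{: J}|.
Local Notation W := 'rV[R]_N.
Definition co (w : W) b1 b2 i j : R := w ord0 (enum_rank ((b1, b2, (i, j)) : J)).
Definition dec (w : W) b : M := \matrix_(i,j) (co w b false i j +i* co w b true i j)%C.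
Definition enc (A P : M) : W := \row_k (let: (b1, b2, (i,j)) := enum_val k in
   (if b2 then IM else RE) ((if b1 then P else A) i j)).

Lemma co_enc A P b1 b2 i j :
  co (enc A P) b1 b2 i j = (if b2 then IM else RE) ((if b1 then P else A) i j).
Proof. by rewrite /co mxE enum_rankK. Qed.

Lemma dec_enc A P : dec (enc A P) false = A /\ dec (enc A P) true = P.
Proof.
by split; apply/matrixP => i j; rewrite mxE !co_enc /=; case: (_ i j).
Qed.

Definition ccont (f : W -> C) :=
  continuous (fun w => RE (f w)) /\ continuous (fun w => IM (f w)).

Lemma ccont_dec b i j : ccont (fun w => dec w b i j).
Proof.
split.
  have -> : (fun w => RE (dec w b i j)) = (fun w => co w b false i j).
    by apply/funext => w; rewrite mxE.
  exact: coord_continuous.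
have -> : (fun w => IM (dec w b i j)) = (fun w => co w b true i j).
  by apply/funext => w; rewrite mxE.
exact: coord_continuous.
Qed.

Lemma ccont_cst (c : C) : ccont (fun _ => c).
Proof. by split; exact: cst_continuous. Qed.

Lemma ccont_add f g : ccont f -> ccont g -> ccont (fun w => f w + g w).
Proof.
move=> [f1 f2] [g1 g2]; split.
  have -> : (fun w => RE (f w + g w)) = (fun w => RE (f w) + RE (g w)).
    by apply/funext => w; rewrite ReD.
  exact: contD.
have -> : (fun w => IM (f w + g w)) = (fun w => IM (f w) + IM (g w)).
  by apply/funext => w; rewrite ImD.
exact: contD.
Qed.

Lemma ccont_opp f : ccont f -> ccont (fun w => - f w).
Proof.
move=> [f1 f2]; split.
  have -> : (fun w => RE (- f w)) = (fun w => - RE (f w)).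
    by apply/funext => w; rewrite ReN.
  exact: contN.
have -> : (fun w => IM (- f w)) = (fun w => - IM (f w)).
  by apply/funext => w; rewrite ImN.
exact: contN.
Qed.

Lemma ccont_mul f g : ccont f -> ccont g -> ccont (fun w => f w * g w).
Proof.
move=> [f1 f2] [g1 g2]; split.
  have -> : (fun w => RE (f w * g w)) =
     (fun w => RE (f w) * RE (g w) + - (IM (f w) * IM (g w))).
    by apply/funext => w; rewrite ReM.
  by apply: contD; [exact: contM|apply: contN; exact: contM].
have -> : (fun w => IM (f w * g w)) =
   (fun w => RE (f w) * IM (g w) + IM (f w) * RE (g w)).
  by apply/funext => w; rewrite ImM.
by apply: contD; exact: contM.
Qed.

Lemma ccont_conj f : ccont f -> ccont (fun w => (f w)^*%C).
Proof.
move=> [f1 f2]; split.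
  have -> : (fun w => RE ((f w)^*%C)) = (fun w => RE (f w)).
    by apply/funext => w; rewrite ReJ.
  done.
have -> : (fun w => IM ((f w)^*%C)) = (fun w => - IM (f w)).
  by apply/funext => w; rewrite ImJ.
exact: contN.
Qed.

Lemma ccont_sum (I : finType) (F : I -> W -> C) :
  (forall i, ccont (F i)) -> ccont (fun w => \sum_i F i w).
Proof.
move=> Fc; split.
  have -> : (fun w => RE (\sum_i F i w)) = (fun w => \sum_i RE (F i w)).
    by apply/funext => w; rewrite Re_sum.
  by apply: cont_sum => i; case: (Fc i).
have -> : (fun w => IM (\sum_i F i w)) = (fun w => \sum_i IM (F i w)).
  by apply/funext => w; rewrite Im_sum.
by apply: cont_sum => i; case: (Fc i).
Qed.

End Enc.

Section Alg.
Variable R : realType.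
Variable d : nat.
Local Notation C := R[i].
Local Notation RE := (@complex.Re R).
Local Notation IM := (@complex.Im R).
Local Notation M := 'M[C]_d.
Local Notation V := 'cV[C]_d.
Implicit Types (A B : M) (u v w : V).

Definition qf (A : M) (u v : V) : C := (adjv u *m A *m v) 0 0.

Lemma qfE A u v : qf A u v = \sum_i \sum_j (u i 0)^*%C * A i j * v j 0.
Proof.
rewrite /qf mxE; under eq_bigr => j _ do rewrite mxE mulr_suml.
rewrite exchange_big /=; apply: eq_bigr => i _; apply: eq_bigr => j _.
by rewrite !mxE.
Qed.

Lemma qfDl A B u v : qf (A + B) u v = qf A u v + qf B u v.
Proof. by rewrite /qf mulmxDr mulmxDl mxE. Qed.
Lemma qfNl A u v : qf (- A) u v = - qf A u v.
Proof. by rewrite /qf mulmxN mulNmx mxE. Qed.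
Lemma qfBl A B u v : qf (A - B) u v = qf A u v - qf B u v.
Proof. by rewrite qfDl qfNl. Qed.
Lemma qfZl c A u v : qf (c *: A) u v = c * qf A u v.
Proof. by rewrite /qf -scalemxAr -scalemxAl mxE. Qed.
Lemma qfDu A u w v : qf A (u + w) v = qf A u v + qf A w v.
Proof.
rewrite !qfE -big_split; apply: eq_bigr => i _; rewrite -big_split.
by apply: eq_bigr => j _; rewrite !mxE rmorphD /= !mulrDl.
Qed.
Lemma qfDv A u w v : qf A v (u + w) = qf A v u + qf A v w.
Proof.
rewrite !qfE -big_split; apply: eq_bigr => i _; rewrite -big_split.
by apply: eq_bigr => j _; rewrite !mxE mulrDr.
Qed.
Lemma qfZu A c u v : qf A (c *: u) v = c^*%C * qf A u v.
Proof.
rewrite !qfE mulr_sumr; apply: eq_bigr => i _; rewrite mulr_sumr.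
by apply: eq_bigr => j _; rewrite !mxE rmorphM /= !mulrA.
Qed.
Lemma qfZv A c u v : qf A v (c *: u) = c * qf A v u.
Proof.
rewrite !qfE mulr_sumr; apply: eq_bigr => i _; rewrite mulr_sumr.
apply: eq_bigr => j _; by rewrite !mxE mulrCA.
Qed.

Definition ev (i : 'I_d) : V := delta_mx i 0.

Lemma qf_ev A i j : qf A (ev i) (ev j) = A i j.
Proof.
rewrite /qf /ev.
have -> : adjv (delta_mx i 0 : V) = delta_mx 0 i.
  by apply/matrixP => a b; rewrite !mxE rmorph_nat andbC.
by rewrite -(rowE i A) -colE !mxE.
Qed.

Lemma qf_polar A i j (c : C) :
  qf A (ev i + c *: ev j) (ev i + c *: ev j) =
  A i i + c * A i j + c^*%C * A j i + c^*%C * c * A j j.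
Proof.
rewrite !(qfDu, qfDv, qfZu, qfZv) !qf_ev.
by rewrite !addrA mulrA.
Qed.

Lemma psdP A : psd A <-> forall v, IM (qf A v v) = 0 /\ 0 <= RE (qf A v v).
Proof. by split => H v; [apply/ge0C; exact: H|apply/ge0C; exact: H]. Qed.

Lemma herm_aux (a b z y : C) : IM a = 0 -> IM b = 0 ->
  IM (a + 1 * z + 1^*%C * y + 1^*%C * 1 * b) = 0 ->
  IM (a + 'i%C * z + 'i%C^*%C * y + 'i%C^*%C * 'i%C * b) = 0 -> y = z^*%C.
Proof.
case: a => a1 a2; case: b => b1 b2; case: z => z1 z2; case: y => y1 y2 /=.
move=> -> ->; simpc => /= h1 h2.
apply: complex_eqP => /=; lra.
Qed.

Lemma psd_herm A : psd A -> forall i j, A j i = (A i j)^*%C.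
Proof.
move=> /psdP H i j.
have [h1 _] := H (ev i + 1 *: ev j).
have [h2 _] := H (ev i + 'i%C *: ev j).
have [h3 _] := H (ev i); have [h4 _] := H (ev j).
rewrite qf_polar in h1; rewrite qf_polar in h2.
rewrite qf_ev in h3; rewrite qf_ev in h4.
exact: herm_aux h3 h4 h1 h2.
Qed.

Lemma eff_aux (a b z e : C) (c : C) :
  IM a = 0 -> IM b = 0 -> IM e = 0 -> 0 <= RE e <= 1 ->
  0 <= RE a -> 0 <= RE b -> 0 <= RE (1 - a) -> 0 <= RE (1 - b) ->
  (c = 1 \/ c = 'i%C) ->
  0 <= RE (a + c * z + c^*%C * z^*%C + c^*%C * c * b) ->
  0 <= RE ((1 + c * e + c^*%C * e + c^*%C * c * 1) -
           (a + c * z + c^*%C * z^*%C + c^*%C * c * b)) ->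
  if c == 1 then `|RE z| <= 2 else `|IM z| <= 2.
Proof.
case: a => a1 a2; case: b => b1 b2; case: z => z1 z2; case: e => e1 e2 /=.
move=> -> -> -> /andP[e0 e1le] ha hb ha1 hb1 [->|->].
  rewrite eqxx; simpc => /= h1 h2.
  rewrite ler_norml; apply/andP; split; lra.
have -> : ('i%C == 1 :> C) = false by rewrite eq_complex /= eq_sym oner_eq0.
simpc => /= h1 h2.
rewrite ler_norml; apply/andP; split; lra.
Qed.

Lemma effect_bound A : effect A -> forall i j, `|RE (A i j)| <= 2 /\ `|IM (A i j)| <= 2.
Proof.
move=> [pA pB] i j.
have hA := (psdP A).1 pA; have hB := (psdP _).1 pB.
have hz := psd_herm pA i j.
have e1 : (1%:M : M) i j = (((i == j)%:R : R)%:C)%C by rewrite mxE; case: (i == j).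
have e2 : (1%:M : M) j i = (((i == j)%:R : R)%:C)%C by rewrite mxE eq_sym; case: (i == j).
have e3 : forall k, (1%:M : M) k k = 1 by move=> k; rewrite mxE eqxx.
have ee : 0 <= RE ((((i == j)%:R : R)%:C)%C) <= 1 by case: (i == j) => /=; rewrite ?lexx ?ler01.
have [ha1 ha2] := hA (ev i); have [hb1 hb2] := hA (ev j).
have [_ ha3] := hB (ev i); have [_ hb3] := hB (ev j).
rewrite !qfBl !qf_ev !e3 in ha3 hb3.
rewrite !qf_ev in ha1 ha2 hb1 hb2.
have K (c : C) : c = 1 \/ c = 'i%C -> if c == 1 then `|RE (A i j)| <= 2 else `|IM (A i j)| <= 2.
  move=> hc; apply: (@eff_aux (A i i) (A j j) (A i j) (((i == j)%:R : R)%:C)%C c) => //.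
  - by have [_] := hA (ev i + c *: ev j); rewrite qf_polar hz.
  have [_] := hB (ev i + c *: ev j); rewrite qfBl !qf_polar e1 e2 !e3 hz.
  done.
split; first by have := K 1 (or_introl erefl); rewrite eqxx.
have := K 'i%C (or_intror erefl).
by have -> : ('i%C == 1 :> C) = false by rewrite eq_complex /= eq_sym oner_eq0.
Qed.

Lemma psd_hermsym A : psd A -> A \is hermsymmx.
Proof.
move=> pA; apply/eqP/matrixP => i j; rewrite !mxE expr0 mul1r.
by rewrite (psd_herm pA i j) conjE conjcK.
Qed.

Lemma tr_mulE (P A : M) k :
  (P *m A *m map_mx Num.conj (P^T)) k k = qf A (\col_a (P k a)^*%C) (\col_a (P k a)^*%C).
Proof.
rewrite qfE mxE; under eq_bigr => b _ do rewrite mxE mulr_suml.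
rewrite exchange_big /=; apply: eq_bigr => a _; apply: eq_bigr => b _.
by rewrite !mxE conjcK.
Qed.

Lemma tr_psd_mul A B : psd A -> psd B -> 0 <= \tr (A *m B).
Proof.
move=> pA pB.
have Bn : B \is normalmx by apply: hermitian_normalmx; exact: psd_hermsym.
set P := spectralmx B; set D := spectral_diag B.
have PU : P \is unitarymx by exact: spectral_unitarymx.
have HB : B = invmx P *m diag_mx D *m P by exact/orthomx_spectralP.
have Pi : invmx P = map_mx Num.conj (P^T) by rewrite invmx_unitary.
have PP : P *m map_mx Num.conj (P^T) = 1%:M by apply/unitarymxP.
have HD : P *m B *m map_mx Num.conj (P^T) = diag_mx D.
  by rewrite HB -Pi !mulmxA mulmxV ?spectral_unit // mul1mx -mulmxA mulmxV ?spectral_unit // mulmx1.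
rewrite HB Pi mulmxA mxtrace_mulC !mulmxA /mxtrace.
apply: sumr_ge0 => k _.
rewrite mul_mx_diag mxE.
apply: mulr_ge0; first by rewrite tr_mulE; exact: pA.
have -> : D 0 k = (diag_mx D) k k by rewrite mxE eqxx mulr1n.
by rewrite -HD tr_mulE; exact: pB.
Qed.

End Alg.

Section IP.
Variable R : realType.
Variable d : nat.
Local Notation C := R[i].
Local Notation RE := (@complex.Re R).
Local Notation IM := (@complex.Im R).
Local Notation M := 'M[C]_d.
Local Notation V := 'cV[C]_d.
Implicit Types (A B H Y Z : M) (u v w : V).

Lemma Re_realM (t : R) (x : C) : RE ((t%:C)%C * x) = t * RE x.
Proof. by case: x => a b; simpc. Qed.

Definition ip Z Y : R := \sum_i \sum_j RE ((Z i j)^*%C * Y i j).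
Definition nrm Z := ip Z Z.

Lemma ipDr Z Y1 Y2 : ip Z (Y1 + Y2) = ip Z Y1 + ip Z Y2.
Proof.
rewrite /ip -big_split; apply: eq_bigr => i _; rewrite -big_split.
by apply: eq_bigr => j _; rewrite mxE mulrDr ReD.
Qed.
Lemma ipNr Z Y : ip Z (- Y) = - ip Z Y.
Proof.
rewrite /ip -sumrN; apply: eq_bigr => i _; rewrite -sumrN.
by apply: eq_bigr => j _; rewrite mxE mulrN ReN.
Qed.
Lemma ipBr Z Y1 Y2 : ip Z (Y1 - Y2) = ip Z Y1 - ip Z Y2.
Proof. by rewrite ipDr ipNr. Qed.
Lemma ipZr Z (t : R) Y : ip Z ((t%:C)%C *: Y) = t * ip Z Y.
Proof.
rewrite /ip mulr_sumr; apply: eq_bigr => i _; rewrite mulr_sumr.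
by apply: eq_bigr => j _; rewrite mxE mulrCA Re_realM.
Qed.
Lemma ipC Z Y : ip Z Y = ip Y Z.
Proof.
rewrite /ip; apply: eq_bigr => i _; apply: eq_bigr => j _.
by rewrite -ReJ rmorphM /= conjcK mulrC.
Qed.
Lemma ipDl Z1 Z2 Y : ip (Z1 + Z2) Y = ip Z1 Y + ip Z2 Y.
Proof. by rewrite ipC ipDr ![ip Y _]ipC. Qed.
Lemma ipNl Z Y : ip (- Z) Y = - ip Z Y.
Proof. by rewrite ipC ipNr ipC. Qed.
Lemma ipBl Z1 Z2 Y : ip (Z1 - Z2) Y = ip Z1 Y - ip Z2 Y.
Proof. by rewrite ipDl ipNl. Qed.
Lemma ipZl Z (t : R) Y : ip ((t%:C)%C *: Z) Y = t * ip Z Y.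
Proof. by rewrite ipC ipZr ipC. Qed.

Lemma RE_sq (z : C) : RE (z^*%C * z) = RE z ^+ 2 + IM z ^+ 2.
Proof. by case: z => a b; simpc => /=; rewrite !expr2; lra. Qed.

Lemma nrm_ge0 Z : 0 <= nrm Z.
Proof.
apply: sumr_ge0 => i _; apply: sumr_ge0 => j _.
by rewrite RE_sq addr_ge0 // sqr_ge0.
Qed.

Lemma entry_le_nrm Z i j : RE (Z i j) ^+ 2 + IM (Z i j) ^+ 2 <= nrm Z.
Proof.
rewrite /nrm /ip (bigD1 i) //= (bigD1 j) //= -RE_sq -addrA lerDl.
apply: addr_ge0.
  by apply: sumr_ge0 => k _; rewrite RE_sq addr_ge0 // sqr_ge0.
apply: sumr_ge0 => k _; apply: sumr_ge0 => l _.
by rewrite RE_sq addr_ge0 // sqr_ge0.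
Qed.

Lemma nrm_eq0 Z : nrm Z = 0 -> Z = 0.
Proof.
move=> h; apply/matrixP => i j; rewrite mxE.
have := entry_le_nrm Z i j; rewrite h => hle.
have h1 : RE (Z i j) ^+ 2 = 0.
  apply/eqP; rewrite eq_le sqr_ge0 andbT.
  by apply: le_trans hle; rewrite lerDl sqr_ge0.
have h2 : IM (Z i j) ^+ 2 = 0.
  apply/eqP; rewrite eq_le sqr_ge0 andbT.
  by apply: le_trans hle; rewrite lerDr sqr_ge0.
move: h1 h2 => /eqP; rewrite sqrf_eq0 => /eqP h1 /eqP; rewrite sqrf_eq0 => /eqP h2.
by apply: complex_eqP.
Qed.

Lemma nrm_expand H D (t : R) :
  nrm (H + (t%:C)%C *: D) = nrm H + 2 * t * ip H D + t ^+ 2 * nrm D.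
Proof.
rewrite /nrm !(ipDl, ipDr, ipZl, ipZr) [ip D H]ipC.
rewrite expr2; lra.
Qed.

Lemma ip_vv H v : ip H (v *m adjv v) = RE (qf H v v).
Proof.
rewrite qfE -ReJ rmorph_sum /= Re_sum; apply: eq_bigr => i _.
rewrite rmorph_sum /= Re_sum; apply: eq_bigr => j _.
rewrite !mxE big_ord1 !mxE conjE !rmorphM /= conjcK.
by rewrite mulrA [(H i j)^*%C * _]mulrC.
Qed.

Lemma expv_ip A (rho : M) : (forall i j, rho j i = (rho i j)^*%C) -> expv A rho = ip rho A.
Proof.
move=> hr; rewrite /expv /mxtrace /ip Re_sum.
apply: eq_bigr => i _.
rewrite mxE Re_sum; apply: eq_bigr => j _.
by rewrite [in RHS]hr conjcK mulrC.
Qed.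

End IP.

Section Min.
Variable R : realType.
Variable d : nat.
Local Notation C := R[i].
Local Notation RE := (@complex.Re R).
Local Notation IM := (@complex.Im R).
Local Notation M := 'M[C]_d.
Local Notation V := 'cV[C]_d.
Local Notation N := #|{: J d}|.
Local Notation W := 'rV[R]_N.
Implicit Types (A B H Y Z : M) (u v : V).

Definition bnd (c : R) Z := forall i j, `|RE (Z i j)| <= c /\ `|IM (Z i j)| <= c.

Lemma cont_qf v : ccont (fun w : W => qf (dec w true) v v).
Proof.
have -> : (fun w : W => qf (dec w true) v v) =
   (fun w => \sum_i \sum_j (v i 0)^*%C * dec w true i j * v j 0).
  by apply/funext => w; rewrite qfE.
apply: ccont_sum => i; apply: ccont_sum => j.
apply: ccont_mul; last exact: ccont_cst.
by apply: ccont_mul; [exact: ccont_cst|exact: ccont_dec].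
Qed.

Lemma closed_psd : closed [set w : W | psd (dec w true)].
Proof.
have -> : [set w : W | psd (dec w true)] = \bigcap_(v in [set: V])
   ([set w | IM (qf (dec w true) v v) = 0] `&` [set w | 0 <= RE (qf (dec w true) v v)]).
  apply/seteqP; split => w /=.
    by move=> /psdP H v _; have [h1 h2] := H v.
  by move=> H; apply/psdP => v; have [] := H v I.
apply: closed_bigI => v _; apply: closedI.
  apply: (@preimage_closed _ _ (fun w : W => IM (qf (dec w true) v v)) [set 0]).
    by move=> x _; case: (cont_qf v) => _; apply.
  exact: closed_eq.
apply: (@preimage_closed _ _ (fun w : W => RE (qf (dec w true) v v)) [set x | 0 <= x]).
  by move=> x _; case: (cont_qf v) => + _; apply.
exact: closed_ge.
Qed.

Lemma closed_A (A : set M) : mx_closed A -> closed [set w : W | A (dec w false)].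
Proof.
move=> cA.
pose g := fun w : W => (map_mx RE (dec w false), map_mx IM (dec w false)).
have -> : [set w : W | A (dec w false)] =
   g @^-1` ((fun A : M => (map_mx RE A, map_mx IM A)) @` A).
  apply/seteqP; split => w /=.
    by move=> h; exists (dec w false).
  move=> [A' hA' [e1 e2]].
  suff -> : dec w false = A' by [].
  apply/matrixP => i j; apply: complex_eqP.
    by move/matrixP: e1 => /(_ i j); rewrite !mxE.
  by move/matrixP: e2 => /(_ i j); rewrite !mxE.
apply: preimage_closed => //.
move=> x _; apply: pair_cont.
  apply: mx_cont => i j.
  have -> : (fun w : W => map_mx RE (dec w false) i j) = (fun w => RE (dec w false i j)).
    by apply/funext => w; rewrite mxE.
  by case: (@ccont_dec R d false i j).
apply: mx_cont => i j.
have -> : (fun w : W => map_mx IM (dec w false) i j) = (fun w => IM (dec w false i j)).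
  by apply/funext => w; rewrite mxE.
by case: (@ccont_dec R d false i j).
Qed.

Lemma box_co (c : R) (w : W) :
  (forall k, `[-c, c]%classic (w ord0 k)) <-> (forall b1 b2 i j, `|co w b1 b2 i j| <= c).
Proof.
split.
  by move=> h b1 b2 i j; have := h (enum_rank ((b1, b2, (i, j)) : J d)); rewrite /= in_itv /= -ler_norml.
move=> h k; rewrite /= in_itv /= -ler_norml.
have := h (enum_val k).1.1 (enum_val k).1.2 (enum_val k).2.1 (enum_val k).2.2.
rewrite /co.
by case: (enum_val k) (enum_valK k) => [[b1 b2] [i j]] /= ->.
Qed.

Lemma bnd_dec (c : R) (w : W) b : (forall b1 b2 i j, `|co w b1 b2 i j| <= c) -> bnd c (dec w b).
Proof. by move=> h i j; rewrite !mxE /=; split; apply: h. Qed.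

Lemma cont_F (X : M) (s : C) :
  continuous (fun w : W => nrm (X - dec w false - s *: dec w true)).
Proof.
have -> : (fun w : W => nrm (X - dec w false - s *: dec w true)) =
   (fun w => \sum_i \sum_j RE ((X i j - dec w false i j - s * dec w true i j)^*%C *
                              (X i j - dec w false i j - s * dec w true i j))).
  apply/funext => w; rewrite /nrm /ip; apply: eq_bigr => i _; apply: eq_bigr => j _.
  by rewrite !mxE.
apply: cont_sum => i; apply: cont_sum => j.
have hE : ccont (fun w : W => X i j - dec w false i j - s * dec w true i j).
  apply: ccont_add; last by apply: ccont_opp; apply: ccont_mul; [exact: ccont_cst|exact: ccont_dec].
  by apply: ccont_add; [exact: ccont_cst|apply: ccont_opp; exact: ccont_dec].
by case: (ccont_mul (ccont_conj hE) hE).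
Qed.

Lemma exists_min (A : set M) (X : M) (s : C) (c : R) :
  (exists M0, A M0) -> mx_closed A -> (forall Z, A Z -> bnd c Z) ->
  exists Ms Ps, [/\ A Ms, psd Ps, bnd c Ps &
    forall M' P', A M' -> psd P' -> bnd c P' ->
      nrm (X - Ms - s *: Ps) <= nrm (X - M' - s *: P')].
Proof.
move=> [M0 hM0] cA hb.
set Box := [set w : W | forall k, `[-c, c]%classic (w ord0 k)].
set D := [set w : W | A (dec w false)] `&` [set w : W | psd (dec w true)].
have cBD : compact (Box `&` D).
  apply: compact_closedI; last exact: closedI (closed_A cA) (@closed_psd).
  exact: (@rV_compact _ _ (fun=> `[-c, c]%classic) (fun=> @segment_compact _ _ _)).
have encB M' P' : bnd c M' -> bnd c P' -> Box (enc M' P').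
  move=> h1 h2; apply/box_co => b1 b2 i j; rewrite co_enc.
  by case: b1; case: b2; [case: (h2 i j)|case: (h2 i j)|case: (h1 i j)|case: (h1 i j)].
have psd0 : psd (0 : M) by move=> v; rewrite /qf mulmx0 mul0mx mxE.
have bnd0 : bnd c (0 : M).
  move=> i j; have [h1 _] := hb M0 hM0 i j.
  have c0 : 0 <= c by apply: le_trans h1.
  by rewrite mxE Re0 Im0 normr0.
have ne : Box `&` D !=set0.
  exists (enc M0 0); split; first by apply: encB => //; exact: hb.
  by have [e1 e2] := dec_enc M0 0; rewrite /D /= e1 e2.
have [w hw hmin] := compact_EVT_min ne cBD (continuous_subspaceT (@cont_F X s)).
move: (hw) => /set_mem [hwB [hwA hwP]].
exists (dec w false), (dec w true); split => //.
  by apply: bnd_dec; apply/box_co.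
move=> M' P' h1 h2 h3.
have := hmin (enc M' P'); have [e1 e2] := dec_enc M' P'; rewrite e1 e2; apply.
apply/mem_set; split; first by apply: encB => //; exact: hb.
by rewrite /D /= e1 e2.
Qed.

End Min.

Section Key.
Variable R : realType.
Variable d : nat.
Local Notation C := R[i].
Local Notation RE := (@complex.Re R).
Local Notation IM := (@complex.Im R).
Local Notation M := 'M[C]_d.
Local Notation V := 'cV[C]_d.
Implicit Types (A B H Y Z : M) (u v : V).

Lemma le_sum2 (F : 'I_d -> 'I_d -> R) i j :
  (forall i j, 0 <= F i j) -> F i j <= \sum_i \sum_j F i j.
Proof.
move=> F0; rewrite (bigD1 i) //= (bigD1 j) //= -addrA lerDl.
apply: addr_ge0; first by apply: sumr_ge0.
by apply: sumr_ge0 => k _; apply: sumr_ge0.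
Qed.

Lemma psd0 : psd (0 : M).
Proof. by move=> v; rewrite /qf mulmx0 mul0mx mxE. Qed.

Lemma psdD A B : psd A -> psd B -> psd (A + B).
Proof. by move=> hA hB v; rewrite -/(qf _ v v) qfDl addr_ge0 //; [exact: hA|exact: hB]. Qed.

Lemma psdZ (t : R) A : 0 <= t -> psd A -> psd ((t%:C)%C *: A).
Proof. by move=> t0 hA v; rewrite -/(qf _ v v) qfZl mulr_ge0 ?ler0c //; exact: hA. Qed.

Lemma psd_real A v : psd A -> IM (qf A v v) = 0.
Proof. by move=> /psdP h; case: (h v). Qed.

Lemma qf_vv u v : qf (v *m adjv v) u u = (qf 1%:M u v) * (qf 1%:M u v)^*%C.
Proof.
rewrite /qf mulmx1 mulmxA -[adjv u *m v *m adjv v *m u]mulmxA mxE big_ord1.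
congr (_ * _); rewrite !mxE rmorph_sum /=; apply: eq_bigr => k _.
by rewrite !mxE conjE rmorphM /= conjcK mulrC.
Qed.

Lemma psd_vv v : psd (v *m adjv v).
Proof. by move=> u; rewrite -/(qf _ u u) qf_vv mulcJ_ge0. Qed.

Lemma bnd_convex (c t : R) Y Z : 0 <= t <= 1 -> bnd c Y -> bnd c Z ->
  bnd c ((t%:C)%C *: Y + ((1 - t)%:C)%C *: Z).
Proof.
move=> /andP[t0 t1] hY hZ i j; rewrite !mxE ReD ImD !Re_realM.
have ImRM (r : R) (x : C) : IM ((r%:C)%C * x) = r * IM x by case: x => a b; simpc.
rewrite !ImRM; have [y1 y2] := hY i j; have [z1 z2] := hZ i j.
split; rewrite ler_norml; move: y1 y2 z1 z2; rewrite !ler_norml => /andP[? ?] /andP[? ?] /andP[? ?] /andP[? ?];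
apply/andP; split; nra.
Qed.

Lemma psd_convex (t : R) Y Z : 0 <= t <= 1 -> psd Y -> psd Z ->
  psd ((t%:C)%C *: Y + ((1 - t)%:C)%C *: Z).
Proof.
move=> /andP[t0 t1] hY hZ; apply: psdD; apply: psdZ => //; lra.
Qed.

Lemma var_aux (a b : R) : 0 <= b -> (forall t, 0 < t < 1 -> 0 <= 2 * a + t * b) -> 0 <= a.
Proof.
move=> b0 h; rewrite leNgt; apply/negP => a0.
pose t := - a / (- a + b + 1).
have den : 0 < - a + b + 1 by lra.
have ht : 0 < t < 1.
  apply/andP; split; first by rewrite /t divr_gt0 //; lra.
  by rewrite /t ltr_pdivrMr // mul1r; lra.
have htb : t * b < - a.
  rewrite /t mulrAC ltr_pdivrMr //; nra.
have := h t ht; lra.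
Qed.

Lemma nrmN Z : nrm (- Z) = nrm Z.
Proof. by rewrite /nrm ipNl ipNr opprK. Qed.

Lemma variational (A : set M) (X Ms Ps : M) (s : C) (c : R) :
  mx_convex A -> A Ms -> psd Ps -> bnd c Ps ->
  (forall M' P', A M' -> psd P' -> bnd c P' ->
     nrm (X - Ms - s *: Ps) <= nrm (X - M' - s *: P')) ->
  forall M' P', A M' -> psd P' -> bnd c P' ->
  0 <= ip (Ms + s *: Ps - X) ((M' - Ms) + s *: (P' - Ps)).
Proof.
move=> cvx hMs hPs hbP hmin M' P' hM hP hb.
set H := Ms + s *: Ps - X; set D := (M' - Ms) + s *: (P' - Ps).
apply: (@var_aux _ (nrm D)) => [|t /andP[t0 t1]]; first exact: nrm_ge0.
have t01 : 0 <= t <= 1 by rewrite !ltW.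
have key := hmin _ _ (cvx _ _ hM hMs t t01) (psd_convex t01 hP hPs) (bnd_convex t01 hb hbP).
have e1 : X - ((t%:C)%C *: M' + ((1 - t)%:C)%C *: Ms) - s *: ((t%:C)%C *: P' + ((1 - t)%:C)%C *: Ps)
   = - (H + (t%:C)%C *: D).
  apply/matrixP => i j; rewrite !mxE rmorphB rmorph1 /=; ring.
have e0 : X - Ms - s *: Ps = - H.
  apply/matrixP => i j; rewrite !mxE; ring.
rewrite e1 e0 !nrmN nrm_expand in key.
have hD := nrm_ge0 D.
nra.
Qed.

Lemma sq_bound (y K : R) : y ^+ 2 <= K -> `|y| <= 1 + K.
Proof.
move=> h; have y2 : y ^+ 2 = `|y| ^+ 2 by rewrite real_normK // num_real.
have n0 := normr_ge0 y.
rewrite y2 in h; nra.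
Qed.

Lemma ImRM (r : R) (x : C) : IM ((r%:C)%C * x) = r * IM x.
Proof. by case: x => a b; simpc. Qed.

Lemma key (A : set M) (X : M) (sg : R) :
  sg = 1 \/ sg = -1 ->
  (exists M0, A M0) -> mx_closed A -> mx_convex A -> (forall Z, A Z -> effect Z) -> effect X ->
  ~ (exists Z, A Z /\ psd ((sg%:C)%C *: (X - Z))) ->
  exists rho, pdensity rho /\ exists2 delta, 0 < delta &
    forall Z, A Z -> sg * expv X rho + delta <= sg * expv Z rho.
Proof.
move=> hsg [M0 hM0] cA cvx hAe hX hno.
have sg2 : sg * sg = 1 by case: hsg => ->; rewrite ?mulrNN mulr1.
have nsg : `|sg| = 1 by case: hsg => ->; rewrite ?normrN normr1.
set s := (sg%:C)%C.
have s2 : s * s = 1 by rewrite /s -rmorphM sg2.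
have nX0 := nrm_ge0 (X - M0).
set c := nrm (X - M0) + 10.
have hbA : forall Z, A Z -> bnd c Z.
  move=> Z /hAe /effect_bound h i j; have [h1 h2] := h i j; split; rewrite /c; lra.
have [Ms [Ps [hMs hPs hbPs hmin]]] := exists_min X s (ex_intro _ M0 hM0) cA hbA.
set H := Ms + s *: Ps - X.
have var := variational cvx hMs hPs hbPs hmin.
have bnd0 : bnd c (0 : M) by move=> i j; rewrite mxE Re0 Im0 normr0 /c; split; lra.
have hE : nrm (X - Ms - s *: Ps) <= nrm (X - M0).
  by have := hmin M0 0 hM0 psd0 bnd0; rewrite scaler0 subr0.
have hbP1 : forall i j, `|RE (Ps i j)| <= c - 1 /\ `|IM (Ps i j)| <= c - 1.
  move=> i j; have := entry_le_nrm (X - Ms - s *: Ps) i j; rewrite !mxE.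
  rewrite ReB ReB ImB ImB Re_realM ImRM => he.
  have [x1 x2] := effect_bound hX i j; have [m1 m2] := effect_bound (hAe _ hMs) i j.
  set y1 := RE (X i j) - RE (Ms i j) - sg * RE (Ps i j).
  set y2 := IM (X i j) - IM (Ms i j) - sg * IM (Ps i j).
  have b1 : `|y1| <= 1 + nrm (X - M0).
    apply: sq_bound; apply: le_trans hE; apply: le_trans he; rewrite lerDl sqr_ge0 //.
  have b2 : `|y2| <= 1 + nrm (X - M0).
    apply: sq_bound; apply: le_trans hE; apply: le_trans he; rewrite lerDr sqr_ge0 //.
  have p1 : RE (Ps i j) = sg * (RE (X i j) - RE (Ms i j) - y1).
    by rewrite /y1 -[LHS]mul1r -sg2; ring.
  have p2 : IM (Ps i j) = sg * (IM (X i j) - IM (Ms i j) - y2).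
    by rewrite /y2 -[LHS]mul1r -sg2; ring.
  rewrite p1 p2 !normrM nsg !mul1r /c.
  split; apply: le_trans (ler_normB _ _) _; apply: le_trans (lerD (ler_normB _ _) (lexx _)) _; lra.
have hreal : forall v, IM (qf H v v) = 0.
  move=> v; rewrite /H qfBl qfDl qfZl ImB ImD ImRM.
  by rewrite (psd_real _ (hAe _ hMs).1) (psd_real _ hPs) (psd_real _ hX.1) mulr0 addr0 subr0.
have hpos : forall v, 0 <= sg * RE (qf H v v).
  move=> v; set y := v *m adjv v.
  set T := 1 + \sum_i \sum_j (`|RE (y i j)| + `|IM (y i j)|).
  have T1 : 1 <= T.
    rewrite /T lerDl; apply: sumr_ge0 => i _; apply: sumr_ge0 => j _.
    by apply: addr_ge0.
  have T0 : 0 < T by lra.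
  set t := T^-1.
  have t0 : 0 < t by rewrite /t invr_gt0.
  have hbQ : forall i j, `|RE (((t%:C)%C *: y) i j)| <= 1 /\ `|IM (((t%:C)%C *: y) i j)| <= 1.
    move=> i j; rewrite mxE Re_realM ImRM !normrM (gtr0_norm t0).
    have hs := @le_sum2 (fun i j => `|RE (y i j)| + `|IM (y i j)|) i j.
    have hs' := hs (fun i j => addr_ge0 (normr_ge0 _) (normr_ge0 _)).
    rewrite /= in hs'.
    have n1 := normr_ge0 (RE (y i j)); have n2 := normr_ge0 (IM (y i j)).
    have e1 : `|RE (y i j)| <= T by rewrite /T; lra.
    have e2 : `|IM (y i j)| <= T by rewrite /T; lra.
    rewrite /t; split; rewrite ler_pdivrMl // mulr1 //.
  have hQ : psd ((t%:C)%C *: y) by apply: psdZ; [exact: ltW|exact: psd_vv].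
  have hb2 : bnd c (Ps + (t%:C)%C *: y).
    move=> i j; have [a1 a2] := hbP1 i j; have [q1 q2] := hbQ i j.
    rewrite mxE ReD ImD; split.
      by apply: le_trans (ler_normD _ _) _; lra.
    by apply: le_trans (ler_normD _ _) _; lra.
  have := var Ms (Ps + (t%:C)%C *: y) hMs (psdD hPs hQ) hb2.
  rewrite subrr add0r [Ps + _ - Ps]addrAC subrr add0r ipZr ipZr -/H ip_vv => h.
  by rewrite mulrCA pmulr_rge0 in h.
have v1 : 0 <= - (sg * ip H Ps).
  have := var Ms 0 hMs psd0 bnd0.
  by rewrite subrr add0r sub0r -/H scalerN ipNr ipZr.
have v2 : forall Z, A Z -> ip H Ms <= ip H Z.
  move=> Z hZ; have := var Z Ps hZ hPs hbPs.
  by rewrite subrr scaler0 addr0 -/H ipBr subr_ge0.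
have hHH : nrm H = ip H Ms + sg * ip H Ps - ip H X.
  by rewrite /nrm {2}/H ipBr ipDr ipZr.
have Hn0 : 0 < nrm H.
  rewrite lt_neqAle nrm_ge0 andbT eq_sym; apply/negP => /eqP /nrm_eq0 H0.
  apply: hno; exists Ms; split => //.
  have eX : X = Ms + s *: Ps.
    by apply/eqP; rewrite eq_sym -subr_eq0 -/H H0.
  by rewrite eX [Ms + _ - Ms]addrAC subrr add0r scalerA s2 scale1r.
set tH := sg * RE (\tr H).
have tH0 : 0 <= tH.
  rewrite /tH /mxtrace Re_sum mulr_sumr; apply: sumr_ge0 => i _.
  by rewrite -qf_ev.
set T2 := 1 + tH.
have T20 : 0 < T2 by rewrite /T2; lra.
set rho := (((sg / T2)%:C)%C) *: H.
have rho_psd : psd rho.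
  move=> v; rewrite -/(qf _ v v) qfZl; apply/ge0C; rewrite ImRM hreal mulr0; split => //.
  rewrite Re_realM mulrAC; apply: divr_ge0; [exact: hpos|exact: ltW].
have trH : IM (\tr H) = 0.
  by rewrite /mxtrace Im_sum big1 // => i _; rewrite -qf_ev hreal.
have rho_tr : \tr rho <= 1.
  rewrite /rho mxtraceZ lecE ImRM trH mulr0 eqxx /= Re_realM mulrAC -/tH.
  by rewrite ler_pdivrMr // mul1r /T2 lerDr.
have rho_herm := psd_herm rho_psd.
exists rho; split; first by split.
exists (nrm H / T2); first by rewrite divr_gt0.
move=> Z hZ; rewrite !expv_ip // /rho !ipZl !mulrA !sg2 ?mul1r.
have := v2 Z hZ => h.
rewrite [nrm H / T2]mulrC -mulrDr ler_pM2l ?invr_gt0 //.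
lra.
Qed.

End Key.

Section Fin.
Variable R : realType.
Variable d : nat.
Local Notation C := R[i].
Local Notation RE := (@complex.Re R).
Local Notation IM := (@complex.Im R).
Local Notation M := 'M[C]_d.
Implicit Types (A B H Y Z rho : M).

Lemma expv_ge0 A rho : psd A -> psd rho -> 0 <= expv A rho.
Proof. by move=> hA hr; have /ge0C[_ ->] := tr_psd_mul hA hr. Qed.

Lemma expvB A B rho : expv (B - A) rho = expv B rho - expv A rho.
Proof. by rewrite /expv mulmxBl linearB /= ReB. Qed.

Lemma lowner_expv A B rho : lowner A B -> psd rho -> expv A rho <= expv B rho.
Proof. by move=> hAB hr; rewrite -subr_ge0 -expvB; exact: expv_ge0. Qed.

Lemma expv_le_tr A rho : effect A -> psd rho -> expv A rho <= RE (\tr rho).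
Proof.
by move=> [_ h1] hr; have := lowner_expv h1 hr; rewrite /expv mul1mx.
Qed.

Lemma dem_ne rho (Th : set M) : Th !=set0 -> Exp_dem rho Th = inf [set expv A rho | A in Th].
Proof.
move=> [x hx]; rewrite /Exp_dem; case: pselect => // h.
by exfalso; move: hx; rewrite h.
Qed.

Lemma ang_ne rho (Th : set M) : Th !=set0 -> Exp_ang rho Th = sup [set expv A rho | A in Th].
Proof.
move=> [x hx]; rewrite /Exp_ang; case: pselect => // h.
by exfalso; move: hx; rewrite h.
Qed.

Lemma img_ne rho (Th : set M) : Th !=set0 -> [set expv A rho | A in Th] !=set0.
Proof. by move=> [x hx]; exists (expv x rho), x. Qed.

Lemma img_lb rho (Th : set M) : (forall Z, Th Z -> effect Z) -> psd rho ->
  has_lbound [set expv A rho | A in Th].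
Proof. by move=> he hr; exists 0 => _ [A hA <-]; apply: expv_ge0 => //; case: (he A hA). Qed.

Lemma img_ub rho (Th : set M) : (forall Z, Th Z -> effect Z) -> psd rho ->
  has_ubound [set expv A rho | A in Th].
Proof. by move=> he hr; exists (RE (\tr rho)) => _ [A hA <-]; apply: expv_le_tr => //; exact: he. Qed.

Theorem main (Th Ps : set M) :
  Th `<=` @effect R d -> Ps `<=` @effect R d ->
  mx_convex Th -> mx_convex Ps -> mx_closed Th -> mx_closed Ps ->
  (Th !=set0 -> (preceq_dem Th Ps <-> le_S Th Ps)) /\
  (Ps !=set0 -> (preceq_ang Th Ps <-> le_H Th Ps)).
Proof.
move=> eTh ePs cvTh cvPs clTh clPs; split => ne; split.
- move=> hdem N hN.
  case: (pselect (exists A, Th A /\ lowner A N)) => // hno; exfalso.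
  have hno' : ~ (exists Z, Th Z /\ psd (((1 : R)%:C)%C *: (N - Z))).
    by move=> [Z [h1 h2]]; apply: hno; exists Z; split=> //; move: h2; rewrite scale1r.
  have [rho [[pr tr] [delta d0 hd]]] := @key R d Th N 1 (or_introl erefl) ne clTh cvTh eTh (ePs _ hN) hno'.
  have := hdem rho (conj pr tr); rewrite !dem_ne //; last by exists N.
  have h1 : expv N rho + delta <= inf [set expv A rho | A in Th].
    by apply: lb_le_inf; [exact: img_ne|move=> y [A hA <-]; have := hd A hA; rewrite !mul1r].
  have h2 : inf [set expv A rho | A in Ps] <= expv N rho.
    by apply: ge_inf; [exact: img_lb|exists N].
  lra.
- move=> hS rho [pr tr]; rewrite dem_ne //.
  case: (pselect (Ps = set0)) => [P0|P0].
    rewrite /Exp_dem; case: pselect => // h0.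
    case: ne => M0 hM0.
    apply: le_trans (expv_le_tr (eTh _ hM0) pr).
    by apply: ge_inf; [exact: img_lb|exists M0].
  have neP : Ps !=set0 by apply/set0P/eqP.
  rewrite dem_ne //; apply: lb_le_inf; first exact: img_ne.
  move=> y [N hN <-]; have [A [hA hAN]] := hS N hN.
  apply: le_trans (lowner_expv hAN pr).
  by apply: ge_inf; [exact: img_lb|exists A].
- move=> hang Mm hM.
  case: (pselect (exists N, Ps N /\ lowner Mm N)) => // hno; exfalso.
  have hno' : ~ (exists Z, Ps Z /\ psd (((-1 : R)%:C)%C *: (Mm - Z))).
    by move=> [Z [h1 h2]]; apply: hno; exists Z; split=> //; move: h2; rewrite rmorphN1 scaleN1r opprB.
  have [rho [[pr tr] [delta d0 hd]]] := @key R d Ps Mm (-1) (or_intror erefl) ne clPs cvPs ePs (eTh _ hM) hno'.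
  have := hang rho (conj pr tr); rewrite !ang_ne //; last by exists Mm.
  have h1 : sup [set expv A rho | A in Ps] <= expv Mm rho - delta.
    apply: ge_sup; first exact: img_ne.
    by move=> y [A hA <-]; have := hd A hA; rewrite !mulN1r; lra.
  have h2 : expv Mm rho <= sup [set expv A rho | A in Th].
    by apply: ub_le_sup; [exact: img_ub|exists Mm].
  lra.
- move=> hH rho [pr tr]; rewrite [Exp_ang rho Ps]ang_ne //.
  case: (pselect (Th = set0)) => [T0|T0].
    rewrite /Exp_ang; case: pselect => // h0.
    case: ne => N0 hN0.
    apply: le_trans (expv_ge0 (ePs _ hN0).1 pr) _.
    by apply: ub_le_sup; [exact: img_ub|exists N0].
  have neT : Th !=set0 by apply/set0P/eqP.
  rewrite ang_ne //; apply: ge_sup; first exact: img_ne.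
  move=> y [A hA <-]; have [N [hN hAN]] := hH A hA.
  apply: le_trans (lowner_expv hAN pr) _.
  by apply: ub_le_sup; [exact: img_ub|exists N].
Qed.

End Fin.

End Dev.

Unset Implicit Arguments. Set Strict Implicit. Set Printing Implicit Defensive.

Local Open Scope classical_set_scope.

(* H_V for a finite set V of qubit variables with |V| = n has dimension 2^n. *)
Theorem theorem3p5 (R : realType) (n : nat) (Th Ps : set 'M[R[i]]_(2 ^ n)) :
  Th `<=` @effect R (2 ^ n) -> Ps `<=` @effect R (2 ^ n) ->
  mx_convex Th -> mx_convex Ps -> mx_closed Th -> mx_closed Ps ->
  (Th !=set0 -> (preceq_dem Th Ps <-> le_S Th Ps)) /\
  (Ps !=set0 -> (preceq_ang Th Ps <-> le_H Th Ps)).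
Proof.
exact: (@main R (2 ^ n) Th Ps).
Qed.
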